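(* Let $M(C,\bar\xi,\pi)$ be a Myller configuration with Darboux frame $(\bar\xi,\bar\mu,\bar v)$ and invariants $G,K,T$, with $(G(s),T(s))\neq(0,0)$ for all $s$. Define $$\sigma_\mu=\frac{G^{2}\left(\frac{T}{G}\right)'-(G^{2}+T^{2})K}{(G^{2}+T^{2})^{3/2}},$$ where $G^2\left(\frac{T}{G}\right)'$ stands for $T'G-TG'$. Then $C$ is a $\bar\mu$-helix in $M$ if and only if $\sigma_\mu$ is constant; in that case the constant angle $\eta$ between $\bar\mu$ and the axis satisfies $\cot\eta=\mp\sigma_\mu$ (for an appropriate sign).
   Context: Let $C$ be a smooth curve in $E^3$ parametrized by arclength $s$; primes denote $d/ds$. A Myller configuration $M(C,\bar\xi,\pi)$ consists of a smooth unit vector field $\bar\xi$ along $C$ and a smooth oriented plane field $\pi$ with $\bar\xi\in\pi$; $\bar v$ is the unit normal of $\pi$, $\bar\mu=\bar v\times\bar\xi$, and the Darboux frame satisfies $\bar\xi'=G\bar\mu+K\bar v$, $\bar\mu'=-G\bar\xi+T\bar v$, $\bar v'=-K\bar\xi-T\bar\mu$. $C$ is a $\bar\mu$-helix in $M$ if there are a constant unit vector $\bar d_\mu$ and a constant $\eta$ with $\langle\bar\mu,\bar d_\mu\rangle=\cos\eta$ along $C$. *)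

(* Defs.v *)
From Stdlib Require Import Reals.
From Coquelicot Require Import Coquelicot.
Open Scope R_scope.

Record vec3 := V3 { vx : R; vy : R; vz : R }.

Definition dot (a b : vec3) : R := vx a * vx b + vy a * vy b + vz a * vz b.

Definition cross (a b : vec3) : vec3 :=
  V3 (vy a * vz b - vz a * vy b)
     (vz a * vx b - vx a * vz b)
     (vx a * vy b - vy a * vx b).

Definition vadd (a b : vec3) : vec3 := V3 (vx a + vx b) (vy a + vy b) (vz a + vz b).
Definition vscal (k : R) (a : vec3) : vec3 := V3 (k * vx a) (k * vy a) (k * vz a).

Definition in_I (a b : Rbar) (s : R) : Prop := Rbar_lt a s /\ Rbar_lt s b.

Definition smooth_on (a b : Rbar) (f : R -> R) : Prop :=
  forall (n : nat) (s : R), in_I a b s -> ex_derive_n f n s.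

Definition vsmooth_on (a b : Rbar) (F : R -> vec3) : Prop :=
  smooth_on a b (fun t => vx (F t)) /\ smooth_on a b (fun t => vy (F t)) /\
  smooth_on a b (fun t => vz (F t)).

Definition vderiv (F : R -> vec3) (s : R) (L : vec3) : Prop :=
  is_derive (fun t => vx (F t)) s (vx L) /\ is_derive (fun t => vy (F t)) s (vy L) /\
  is_derive (fun t => vz (F t)) s (vz L).

Definition myller_config (a b : Rbar) (r xi mu v : R -> vec3) (G K T : R -> R) : Prop :=
  vsmooth_on a b r /\ vsmooth_on a b xi /\ vsmooth_on a b mu /\ vsmooth_on a b v /\
  smooth_on a b G /\ smooth_on a b K /\ smooth_on a b T /\
  forall s, in_I a b s ->
    (exists r', vderiv r s r' /\ dot r' r' = 1) /\
    dot (xi s) (xi s) = 1 /\ dot (v s) (v s) = 1 /\ dot (xi s) (v s) = 0 /\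
    mu s = cross (v s) (xi s) /\
    vderiv xi s (vadd (vscal (G s) (mu s)) (vscal (K s) (v s))) /\
    vderiv mu s (vadd (vscal (- G s) (xi s)) (vscal (T s) (v s))) /\
    vderiv v s (vadd (vscal (- K s) (xi s)) (vscal (- T s) (mu s))).

Definition mu_helix (a b : Rbar) (mu : R -> vec3) : Prop :=
  exists (d : vec3) (eta : R), dot d d = 1 /\
    forall s, in_I a b s -> dot (mu s) d = cos eta.

Definition sigma_mu (G K T : R -> R) (s : R) : R :=
  (Derive T s * G s - T s * Derive G s - (G s ^ 2 + T s ^ 2) * K s)
  / Rpower (G s ^ 2 + T s ^ 2) (3 / 2).

(* Main.v *)
Require Import Defs.
From Stdlib Require Import Reals.
From Coquelicot Require Import Coquelicot.
From Stdlib Require Import Lra Psatz Classical.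
Open Scope R_scope.

Lemma dmul (f g : R -> R) (s f' g' : R) : is_derive f s f' -> is_derive g s g' ->
  is_derive (fun t => f t * g t) s (f' * g s + f s * g').
Proof. intros; apply (is_derive_mult f g); auto. intros; apply Rmult_comm. Qed.
Lemma dplus (f g : R -> R) (s f' g' : R) : is_derive f s f' -> is_derive g s g' ->
  is_derive (fun t => f t + g t) s (f' + g').
Proof. intros; apply (is_derive_plus f g); auto. Qed.
Lemma dminus (f g : R -> R) (s f' g' : R) : is_derive f s f' -> is_derive g s g' ->
  is_derive (fun t => f t - g t) s (f' - g').
Proof. intros; apply (is_derive_minus f g); auto. Qed.
Lemma dconst (c s : R) : is_derive (fun _ => c) s 0.
Proof. apply (is_derive_const c s). Qed.
Lemma deq (f : R -> R) (s l l' : R) : is_derive f s l -> l = l' -> is_derive f s l'.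
Proof. intros H ->; exact H. Qed.

Lemma dot_derive F s L d : vderiv F s L -> is_derive (fun t => dot (F t) d) s (dot L d).
Proof.
  intros [H1 [H2 H3]]. unfold dot.
  apply dplus; [apply dplus|]; (eapply deq; [apply dmul; [eassumption| apply dconst]|]); simpl; ring.
Qed.

Lemma dot_vadd a b d : dot (vadd a b) d = dot a d + dot b d.
Proof. unfold dot, vadd; simpl; ring. Qed.
Lemma dot_vscal k a d : dot (vscal k a) d = k * dot a d.
Proof. unfold dot, vscal; simpl; ring. Qed.
Lemma dot_comm a b : dot a b = dot b a.
Proof. unfold dot; ring. Qed.
Lemma cross_norm a b : dot (cross a b) (cross a b) = dot a a * dot b b - dot a b ^ 2.
Proof. destruct a, b; unfold dot, cross; simpl; ring. Qed.
Lemma cross_l a b : dot (cross a b) a = 0.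
Proof. destruct a, b; unfold dot, cross; simpl; ring. Qed.
Lemma cross_r a b : dot (cross a b) b = 0.
Proof. destruct a, b; unfold dot, cross; simpl; ring. Qed.
Lemma gram d a b : (dot d (cross a b))^2 = dot d d * dot a a * dot b b
  + 2 * dot d a * dot a b * dot b d - dot d d * dot a b ^2 - dot a a * dot d b ^2
  - dot b b * dot d a ^2.
Proof. destruct a, b, d; unfold dot, cross; simpl; ring. Qed.

Lemma in_I_locally a b s : in_I a b s -> locally s (in_I a b).
Proof.
  intros [H1 H2].
  assert (A := open_Rbar_gt' s a H1). assert (B := open_Rbar_lt' s b H2).
  simpl in A, B. 
  apply (filter_and _ _ A B).
Qed.

Lemma in_I_between a b s t x : in_I a b s -> in_I a b t -> Rmin s t <= x <= Rmax s t -> in_I a b x.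
Proof.
  intros [H1 H2] [H3 H4] [H5 H6]; split.
  - destruct a; simpl in *; auto.
    destruct (Rle_dec s t); [rewrite Rmin_left in H5 by lra|rewrite Rmin_right in H5 by lra]; lra.
  - destruct b; simpl in *; auto.
    destruct (Rle_dec s t); [rewrite Rmax_right in H6 by lra|rewrite Rmax_left in H6 by lra]; lra.
Qed.

Lemma in_I_ex a b : Rbar_lt a b -> exists s, in_I a b s.
Proof.
  intros H; unfold in_I; destruct a as [a| |], b as [b| |]; simpl in *; try tauto.
  - exists ((a+b)/2); split; lra.
  - exists (a+1); split; auto; lra.
  - exists (b-1); split; auto; lra.
  - exists 0; split; auto.
Qed.

Lemma cont_of_derive f t : ex_derive f t -> continuity_pt f t.
Proof. intros H; apply continuity_pt_filterlim; apply (ex_derive_continuous f t H). Qed.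

Lemma const_on a b f : (forall t, in_I a b t -> is_derive f t 0) ->
  forall s t, in_I a b s -> in_I a b t -> f s = f t.
Proof.
  intros H s t Hs Ht.
  destruct (MVT_gen f s t (fun _ => 0)) as [c [_ Hc]].
  - intros x Hx. apply H. apply (in_I_between a b s t x); auto; lra.
  - intros x Hx. apply cont_of_derive. eexists. apply H. apply (in_I_between a b s t x); auto.
  - lra.
Qed.

Lemma deriv_of_const a b f c s l : in_I a b s -> (forall t, in_I a b t -> f t = c) ->
  is_derive f s l -> l = 0.
Proof.
  intros Hs Hc Hd.
  assert (Hd' : is_derive (fun _ => c) s l).
  { apply (is_derive_ext_loc f). eapply filter_imp; [|apply (in_I_locally a b s Hs)].
    intros; apply Hc; auto. auto. }
  assert (E1 := is_derive_unique _ _ _ Hd'). assert (E2 := is_derive_unique _ _ _ (dconst c s)).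
  rewrite <- E1, E2; auto.
Qed.

Lemma sign_const a b u : (forall t, in_I a b t -> continuity_pt u t) ->
  (forall t, in_I a b t -> u t * u t = 1) ->
  (forall t, in_I a b t -> u t = 1) \/ (forall t, in_I a b t -> u t = -1).
Proof.
  intros Hc Hu.
  destruct (classic (exists t, in_I a b t /\ u t = -1)) as [[t1 [H1 E1]]|N].
  - right. intros t2 H2.
    assert (Hsq := Hu t2 H2).
    destruct (classic (u t2 = -1)) as [|Hne]; auto. exfalso.
    assert (E2 : u t2 = 1).
    { assert (Hp : (u t2 - 1) * (u t2 + 1) = 0) by nra.
      destruct (Rmult_integral _ _ Hp); lra. }
    destruct (Rtotal_order t1 t2) as [Hlt|[Heq|Hgt]].
    + destruct (Ranalysis5.IVT_interv u t1 t2) as [z [Hz Ez]]; auto; try lra.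
      * intros x Hx; apply Hc; apply (in_I_between a b t1 t2 x); auto.
        rewrite Rmin_left, Rmax_right; lra.
      * assert (Hzz := Hu z (in_I_between a b t1 t2 z H1 H2 ltac:(rewrite Rmin_left, Rmax_right; lra))). nra.
    + subst; lra.
    + destruct (Ranalysis5.IVT_interv (fun x => - u x) t2 t1) as [z [Hz Ez]]; auto; try lra.
      * intros x Hx; apply continuity_pt_opp; apply Hc; apply (in_I_between a b t2 t1 x); auto.
        rewrite Rmin_left, Rmax_right; lra.
      * assert (Hzz := Hu z (in_I_between a b t2 t1 z H2 H1 ltac:(rewrite Rmin_left, Rmax_right; lra))). nra.
  - left. intros t Ht. assert (Hsq := Hu t Ht).
    destruct (classic (u t = 1)); auto. exfalso; apply N; exists t; split; auto.
    assert (Hp : (u t - 1) * (u t + 1) = 0) by nra.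
    destruct (Rmult_integral _ _ Hp); lra.
Qed.

Lemma frame_at a b r xi mu v G K T s : myller_config a b r xi mu v G K T -> in_I a b s ->
  dot (xi s) (xi s) = 1 /\ dot (v s) (v s) = 1 /\ dot (xi s) (v s) = 0 /\
  dot (mu s) (mu s) = 1 /\ dot (mu s) (xi s) = 0 /\ dot (mu s) (v s) = 0 /\
  (forall d, dot d d = (dot (xi s) d)^2 + (dot (mu s) d)^2 + (dot (v s) d)^2) /\
  vderiv xi s (vadd (vscal (G s) (mu s)) (vscal (K s) (v s))) /\
  vderiv mu s (vadd (vscal (- G s) (xi s)) (vscal (T s) (v s))) /\
  vderiv v s (vadd (vscal (- K s) (xi s)) (vscal (- T s) (mu s))) /\
  ex_derive G s /\ ex_derive T s.
Proof.
  intros (_&_&_&_&HG&_&HT&H) Hs.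
  destruct (H s Hs) as (_&H1&H2&H3&H4&H5&H6&H7).
  assert (mm : dot (mu s) (mu s) = 1).
  { rewrite H4, cross_norm, H1, H2, dot_comm, H3; ring. }
  assert (mx : dot (mu s) (xi s) = 0) by (rewrite H4; apply cross_r).
  assert (mv : dot (mu s) (v s) = 0) by (rewrite H4; apply cross_l).
  do 6 (split; [assumption|]). split.
  - intros d. assert (Hg := gram d (v s) (xi s)).
    rewrite <- H4, H1, H2, (dot_comm (v s) (xi s)), H3 in Hg.
    rewrite (dot_comm (mu s) d), Hg, (dot_comm (xi s) d), (dot_comm (v s) d). ring.
  - do 3 (split; [assumption|]). split; [exact (HG 1%nat s Hs)|exact (HT 1%nat s Hs)].
Qed.

Lemma NposR (g t : R) : (g, t) <> (0, 0) -> 0 < g ^ 2 + t ^ 2.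
Proof.
  intros H. destruct (Req_dec g 0); destruct (Req_dec t 0); subst; try (exfalso; apply H; reflexivity); nra.
Qed.

Lemma rpow32 N : 0 < N -> Rpower N (3/2) = N * sqrt N.
Proof.
  intros H. replace (3/2) with (1 + /2) by field. rewrite Rpower_plus, Rpower_1, Rpower_sqrt; auto.
Qed.

Lemma part2 a b r xi mu v G K T :
  Rbar_lt a b ->
  myller_config a b r xi mu v G K T ->
  (forall s, in_I a b s -> (G s, T s) <> (0, 0)) ->
  forall (d : vec3) (eta : R), dot d d = 1 ->
     (forall s, in_I a b s -> dot (mu s) d = cos eta) ->
     sin eta <> 0 /\
     ((forall s, in_I a b s -> cos eta / sin eta = - sigma_mu G K T s) \/
      (forall s, in_I a b s -> cos eta / sin eta = sigma_mu G K T s)).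
Proof.
  intros Hab Hc HGT d eta Hd Hmu.
  set (c := cos eta) in *.
  set (X := fun t => dot (xi t) d). set (Z := fun t => dot (v t) d).
  assert (E1 : forall t, in_I a b t -> T t * Z t - G t * X t = 0).
  { intros t Ht. destruct (frame_at _ _ _ _ _ _ _ _ _ t Hc Ht) as (_&_&_&_&_&_&_&_&Dm&_).
    assert (H := deriv_of_const a b _ c t _ Ht Hmu (dot_derive _ _ _ d Dm)).
    rewrite dot_vadd, !dot_vscal in H. unfold X, Z. lra. }
  assert (E2 : forall t, in_I a b t ->
     (Derive T t * Z t + T t * (- K t * X t - T t * c)) - (Derive G t * X t + G t * (G t * c + K t * Z t)) = 0).
  { intros t Ht. destruct (frame_at _ _ _ _ _ _ _ _ _ t Hc Ht) as (_&_&_&_&_&_&_&Dx&_&Dv&eG&eT).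
    assert (H := deriv_of_const a b (fun t => T t * Z t - G t * X t) 0 t _ Ht E1
      (dminus _ _ _ _ _ (dmul _ _ _ _ _ (Derive_correct _ _ eT) (dot_derive _ _ _ d Dv))
                        (dmul _ _ _ _ _ (Derive_correct _ _ eG) (dot_derive _ _ _ d Dx)))).
    rewrite !dot_vadd, !dot_vscal, Hmu in H by auto. fold (X t) (Z t) in H. rewrite <- H. ring. }
  assert (E3 : forall t, in_I a b t -> X t ^ 2 + c ^ 2 + Z t ^ 2 = 1).
  { intros t Ht. destruct (frame_at _ _ _ _ _ _ _ _ _ t Hc Ht) as (_&_&_&_&_&_&Hcomp&_).
    rewrite <- (Hmu t Ht), <- Hd, (Hcomp d). unfold X, Z; ring. }
  set (w := fun t => T t * X t + G t * Z t).
  set (P := fun t => Derive T t * G t - T t * Derive G t - (G t ^ 2 + T t ^ 2) * K t).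
  assert (W1 : forall t, in_I a b t -> w t ^ 2 = (G t ^ 2 + T t ^ 2) * (sin eta) ^ 2).
  { intros t Ht. assert (HN := NposR _ _ (HGT t Ht)).
    assert (e1 := E1 t Ht). assert (e3 := E3 t Ht).
    assert (Hs : sin eta ^ 2 = 1 - c ^ 2) by (unfold c; rewrite <- (sin2_cos2 eta); unfold Rsqr; ring).
    rewrite Hs. unfold w.
    apply Rmult_eq_reg_l with (G t ^ 2 + T t ^ 2); [|lra].
    replace (1 - c^2) with (X t ^2 + Z t ^ 2) by lra.
    replace ((G t ^ 2 + T t ^ 2) * (T t * X t + G t * Z t) ^ 2) with
      ((T t ^ 2 + G t ^ 2) * ((T t * X t + G t * Z t) ^ 2)) by ring.
    assert (A1 : (G t ^ 2 + T t ^ 2) * X t = T t * (T t * X t + G t * Z t)).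
    { assert (e : T t * Z t = G t * X t) by lra.
      replace (T t * (T t * X t + G t * Z t)) with (T t ^ 2 * X t + G t * (T t * Z t)) by ring.
      rewrite e; ring. }
    assert (A2 : (G t ^ 2 + T t ^ 2) * Z t = G t * (T t * X t + G t * Z t)).
    { assert (e : T t * Z t = G t * X t) by lra.
      replace (G t * (T t * X t + G t * Z t)) with (G t ^ 2 * Z t + T t * (G t * X t)) by ring.
      rewrite <- e; ring. }
    replace ((G t ^ 2 + T t ^ 2) * ((G t ^ 2 + T t ^ 2) * (X t ^ 2 + Z t ^ 2))) with
      (((G t ^ 2 + T t ^ 2) * X t) ^ 2 + ((G t ^ 2 + T t ^ 2) * Z t) ^ 2) by ring.
    rewrite A1, A2. ring. }
  assert (W2 : forall t, in_I a b t -> w t * P t = (G t ^ 2 + T t ^ 2) ^ 2 * c).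
  { intros t Ht. assert (e1 := E1 t Ht). assert (e2 := E2 t Ht).
    assert (e : T t * Z t = G t * X t) by lra.
    assert (A1 : (G t ^ 2 + T t ^ 2) * X t = T t * w t).
    { unfold w. replace (T t * (T t * X t + G t * Z t)) with (T t ^ 2 * X t + G t * (T t * Z t)) by ring.
      rewrite e; ring. }
    assert (A2 : (G t ^ 2 + T t ^ 2) * Z t = G t * w t).
    { unfold w. replace (G t * (T t * X t + G t * Z t)) with (G t ^ 2 * Z t + T t * (G t * X t)) by ring.
      rewrite <- e; ring. }
    assert (Nc : (G t ^ 2 + T t ^ 2) * c = Derive T t * Z t - Derive G t * X t - K t * w t).
    { unfold w. rewrite <- (Rminus_0_r (Derive T t * Z t - _ - _)), <- e2. ring. }
    transitivity (Derive T t * ((G t ^ 2 + T t ^ 2) * Z t) - Derive G t * ((G t ^ 2 + T t ^ 2) * X t)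
       - (G t ^ 2 + T t ^ 2) * K t * w t).
    { rewrite A1, A2. unfold P. ring. }
    { replace ((G t ^ 2 + T t ^ 2) ^ 2 * c) with ((G t ^ 2 + T t ^ 2) * ((G t ^ 2 + T t ^ 2) * c)) by ring.
      rewrite Nc. ring. } }
  destruct (in_I_ex a b Hab) as [s0 Hs0].
  assert (Hsin : sin eta <> 0).
  { intros H0. assert (w1 := W1 s0 Hs0). assert (w2 := W2 s0 Hs0).
    assert (HN := NposR _ _ (HGT s0 Hs0)). rewrite H0 in w1.
    assert (w s0 = 0) by nra. rewrite H in w2.
    rewrite Rmult_0_l in w2. symmetry in w2. apply Rmult_integral in w2.
    destruct w2 as [w2|w2]; [exfalso; apply pow_nonzero in w2; auto; lra|].
    assert (Hs := sin2_cos2 eta). unfold Rsqr in Hs. fold c in Hs. rewrite H0, w2 in Hs. lra. }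
  split; [exact Hsin|].
  set (u := fun t => w t / (sqrt (G t ^ 2 + T t ^ 2) * sin eta)).
  assert (U1 : forall t, in_I a b t -> u t * u t = 1).
  { intros t Ht. assert (HN := NposR _ _ (HGT t Ht)). assert (w1 := W1 t Ht).
    assert (Hq := sqrt_sqrt _ (Rlt_le _ _ HN)). assert (Hq0 := sqrt_lt_R0 _ HN).
    unfold u. set (q := sqrt (G t ^ 2 + T t ^ 2)) in *.
    replace (w t / (q * sin eta) * (w t / (q * sin eta))) with (w t ^ 2 / ((q * q) * sin eta ^ 2))
      by (field; split; lra).
    rewrite Hq, w1. field. split; try lra; try (apply pow_nonzero; auto). }
  assert (U0 : forall t, in_I a b t -> continuity_pt u t).
  { intros t Ht. apply cont_of_derive. 
    destruct (frame_at _ _ _ _ _ _ _ _ _ t Hc Ht) as (_&_&_&_&_&_&_&Dx&_&Dv&eG&eT).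
    assert (eX : ex_derive X t) by (eexists; apply (dot_derive _ _ _ d Dx)).
    assert (eZ : ex_derive Z t) by (eexists; apply (dot_derive _ _ _ d Dv)).
    assert (HN := NposR _ _ (HGT t Ht)).
    unfold u, w. clearbody X Z. auto_derive.
    assert (Hq0 := sqrt_lt_R0 _ HN).
    replace (G t * (G t * 1) + T t * (T t * 1)) with (G t ^ 2 + T t ^ 2) by ring.
    repeat split; auto. apply Rmult_integral_contrapositive; split; lra. }
  destruct (sign_const a b u U0 U1) as [Hu|Hu]; [right|left]; intros t Ht.
  all: assert (HN := NposR _ _ (HGT t Ht)); assert (Hq := sqrt_sqrt _ (Rlt_le _ _ HN));
    assert (Hq0 := sqrt_lt_R0 _ HN); set (q := sqrt (G t ^ 2 + T t ^ 2)) in *;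
    assert (Hw : w t = u t * (q * sin eta)) by (unfold u; fold q; field; split; lra);
    rewrite Hu in Hw by auto;
    unfold sigma_mu; rewrite rpow32 by auto; fold q;
    change (Derive T t * G t - T t * Derive G t - (G t ^ 2 + T t ^ 2) * K t) with (P t).
  - assert (HPs : P t * sin eta = q * (G t ^ 2 + T t ^ 2) * c).
    { apply Rmult_eq_reg_l with q; [|lra]. transitivity (w t * P t); [rewrite Hw; ring|].
      rewrite W2 by auto. rewrite <- Hq; ring. }
    assert (HP2 : P t = q * (G t ^ 2 + T t ^ 2) * c / sin eta) by (rewrite <- HPs; field; auto).
    rewrite HP2. field. repeat split; lra.
  - assert (HPs : P t * sin eta = - (q * (G t ^ 2 + T t ^ 2) * c)).
    { apply Rmult_eq_reg_l with q; [|lra]. transitivity (- (w t * P t)); [rewrite Hw; ring|].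
      rewrite W2 by auto. rewrite <- Hq; ring. }
    assert (HP2 : P t = - (q * (G t ^ 2 + T t ^ 2) * c) / sin eta) by (rewrite <- HPs; field; auto).
    rewrite HP2. field. repeat split; lra.
Qed.

Lemma lam_deriv (G T : R -> R) s m G' T' : is_derive G s G' -> is_derive T s T' ->
  0 < G s ^ 2 + T s ^ 2 ->
  is_derive (fun t => m / sqrt (G t ^ 2 + T t ^ 2)) s
    (- m * (G s * G' + T s * T') / ((G s ^ 2 + T s ^ 2) * sqrt (G s ^ 2 + T s ^ 2))).
Proof.
  intros HG HT HN.
  assert (Hq := sqrt_sqrt _ (Rlt_le _ _ HN)). assert (Hq0 := sqrt_lt_R0 _ HN).
  auto_derive.
  - replace (G s * (G s * 1) + T s * (T s * 1)) with (G s ^ 2 + T s ^ 2) by ring.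
    repeat split; try (eexists; eassumption); try lra.
  - replace (Derive (fun x => G x) s) with G' by (symmetry; apply is_derive_unique; auto).
    replace (Derive (fun x => T x) s) with T' by (symmetry; apply is_derive_unique; auto).
    replace (G s * (G s * 1) + T s * (T s * 1)) with (G s ^ 2 + T s ^ 2) by ring.
    set (q := sqrt (G s ^ 2 + T s ^ 2)) in *. clearbody q.
    rewrite <- Hq. match goal with |- ?x = ?y => change (@eq R x y) end. change RinvImpl.Rinv with Rinv. field. lra.
Qed.

Lemma comp_deriv (X M V G T K : R -> R) s c0 m G' T' :
  is_derive X s (G s * M s + K s * V s) ->
  is_derive M s (- G s * X s + T s * V s) ->
  is_derive V s (- K s * X s + - T s * M s) ->
  is_derive G s G' -> is_derive T s T' -> 0 < G s ^ 2 + T s ^ 2 ->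
  (T' * G s - T s * G' - (G s ^ 2 + T s ^ 2) * K s)
    / ((G s ^ 2 + T s ^ 2) * sqrt (G s ^ 2 + T s ^ 2)) = c0 ->
  is_derive (fun t => c0 * m * M t + m / sqrt (G t ^ 2 + T t ^ 2) * (T t * X t + G t * V t)) s 0.
Proof.
  intros HX HM HV HG HT HN Hs.
  assert (Hq := sqrt_sqrt _ (Rlt_le _ _ HN)). assert (Hq0 := sqrt_lt_R0 _ HN).
  eapply deq.
  { apply dplus.
    - apply (is_derive_scal M s (c0 * m)); exact HM.
    - apply dmul; [apply (lam_deriv G T s m G' T' HG HT HN)|].
      apply dplus; apply dmul; eauto. }
  cbv beta. set (q := sqrt (G s ^ 2 + T s ^ 2)) in *. clearbody q.
  assert (HK : K s = (T' * G s - T s * G' - c0 * (G s ^ 2 + T s ^ 2) * q) / (G s ^ 2 + T s ^ 2)).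
  { rewrite <- Hs. field. lra. }
  rewrite HK. match goal with |- ?x = ?y => change (@eq R x y) end. field. lra.
Qed.

Lemma dot_vadd_r a b d : dot d (vadd a b) = dot d a + dot d b.
Proof. unfold dot, vadd; simpl; ring. Qed.
Lemma dot_vscal_r k a d : dot d (vscal k a) = k * dot d a.
Proof. unfold dot, vscal; simpl; ring. Qed.

Lemma part1_conv a b r xi mu v G K T c0 :
  Rbar_lt a b ->
  myller_config a b r xi mu v G K T ->
  (forall s, in_I a b s -> (G s, T s) <> (0, 0)) ->
  (forall s, in_I a b s -> sigma_mu G K T s = c0) ->
  mu_helix a b mu.
Proof.
  intros Hab Hc HGT Hsig.
  assert (H1c : 0 < 1 + c0 ^ 2) by nra.
  set (m := 1 / sqrt (1 + c0 ^ 2)).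
  set (E := fun t => vadd (vscal (c0 * m) (mu t))
     (vscal (m / sqrt (G t ^ 2 + T t ^ 2)) (vadd (vscal (T t) (xi t)) (vscal (G t) (v t))))).
  assert (Hder : forall t, in_I a b t ->
     is_derive (fun t => vx (E t)) t 0 /\ is_derive (fun t => vy (E t)) t 0 /\
     is_derive (fun t => vz (E t)) t 0).
  { intros t Ht.
    destruct (frame_at _ _ _ _ _ _ _ _ _ t Hc Ht) as (_&_&_&_&_&_&_&Dx&Dm&Dv&eG&eT).
    assert (HN := NposR _ _ (HGT t Ht)).
    assert (Hs := Hsig t Ht). unfold sigma_mu in Hs. rewrite rpow32 in Hs by auto.
    destruct Dx as (Dx1&Dx2&Dx3), Dm as (Dm1&Dm2&Dm3), Dv as (Dv1&Dv2&Dv3).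
    split; [|split].
    - exact (comp_deriv (fun t => vx (xi t)) (fun t => vx (mu t)) (fun t => vx (v t)) G T K t c0 m
        _ _ Dx1 Dm1 Dv1 (Derive_correct _ _ eG) (Derive_correct _ _ eT) HN Hs).
    - exact (comp_deriv (fun t => vy (xi t)) (fun t => vy (mu t)) (fun t => vy (v t)) G T K t c0 m
        _ _ Dx2 Dm2 Dv2 (Derive_correct _ _ eG) (Derive_correct _ _ eT) HN Hs).
    - exact (comp_deriv (fun t => vz (xi t)) (fun t => vz (mu t)) (fun t => vz (v t)) G T K t c0 m
        _ _ Dx3 Dm3 Dv3 (Derive_correct _ _ eG) (Derive_correct _ _ eT) HN Hs). }
  destruct (in_I_ex a b Hab) as [s0 Hs0].
  assert (Heq : forall t, in_I a b t -> dot (mu t) (E s0) = dot (mu t) (E t)).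
  { intros t Ht. unfold dot.
    rewrite (const_on a b (fun t => vx (E t)) (fun t Ht => proj1 (Hder t Ht)) s0 t Hs0 Ht).
    rewrite (const_on a b (fun t => vy (E t)) (fun t Ht => proj1 (proj2 (Hder t Ht))) s0 t Hs0 Ht).
    rewrite (const_on a b (fun t => vz (E t)) (fun t Ht => proj2 (proj2 (Hder t Ht))) s0 t Hs0 Ht).
    reflexivity. }
  assert (Hsq := sqrt_sqrt _ (Rlt_le _ _ H1c)). assert (Hsq0 := sqrt_lt_R0 _ H1c).
  exists (E s0), (PI / 2 - atan c0). split.
  - destruct (frame_at _ _ _ _ _ _ _ _ _ s0 Hc Hs0) as (xx&vv&xv&mm&mx&mv&_).
    assert (HN := NposR _ _ (HGT s0 Hs0)).
    assert (Hq := sqrt_sqrt _ (Rlt_le _ _ HN)). assert (Hq0 := sqrt_lt_R0 _ HN).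
    unfold E. repeat first [rewrite dot_vadd | rewrite dot_vscal | rewrite dot_vadd_r | rewrite dot_vscal_r].
    rewrite (dot_comm (xi s0) (mu s0)), (dot_comm (v s0) (mu s0)), (dot_comm (v s0) (xi s0)).
    rewrite xx, vv, xv, mm, mx, mv.
    set (q := sqrt (G s0 ^ 2 + T s0 ^ 2)) in *. clearbody q.
    unfold m. set (p := sqrt (1 + c0 ^ 2)) in *. clearbody p.
    transitivity ((c0 ^ 2 + (G s0 ^ 2 + T s0 ^ 2) / (q * q)) / (p * p)); [field; lra|].
    rewrite Hq, Hsq. field. lra.
  - intros t Ht. rewrite Heq by auto.
    destruct (frame_at _ _ _ _ _ _ _ _ _ t Hc Ht) as (xx&vv&xv&mm&mx&mv&_).
    unfold E. repeat first [rewrite dot_vadd_r | rewrite dot_vscal_r]. rewrite mm, mx, mv.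
    rewrite cos_shift, sin_atan. unfold m. unfold Rsqr. replace (1 + c0 * c0) with (1 + c0 ^ 2) by ring. field. assert (HN := NposR _ _ (HGT t Ht)). assert (Hq0 := sqrt_lt_R0 _ HN). split; lra.
Qed.

Theorem theorem17 (a b : Rbar) (r xi mu v : R -> vec3) (G K T : R -> R) :
  Rbar_lt a b ->
  myller_config a b r xi mu v G K T ->
  (forall s, in_I a b s -> (G s, T s) <> (0, 0)) ->
  (mu_helix a b mu <->
     exists c : R, forall s, in_I a b s -> sigma_mu G K T s = c) /\
  (forall (d : vec3) (eta : R), dot d d = 1 ->
     (forall s, in_I a b s -> dot (mu s) d = cos eta) ->
     sin eta <> 0 /\
     ((forall s, in_I a b s -> cos eta / sin eta = - sigma_mu G K T s) \/
      (forall s, in_I a b s -> cos eta / sin eta = sigma_mu G K T s))).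
Proof.
  intros Hab Hc HGT. split; [split|].
  - intros [d [eta [Hd Hm]]].
    destruct (part2 a b r xi mu v G K T Hab Hc HGT d eta Hd Hm) as [_ [L|R]].
    + exists (- (cos eta / sin eta)). intros s Hs. rewrite (L s Hs). ring.
    + exists (cos eta / sin eta). intros s Hs. rewrite (R s Hs). reflexivity.
  - intros [c0 H]. exact (part1_conv a b r xi mu v G K T c0 Hab Hc HGT H).
  - intros d eta Hd Hm. exact (part2 a b r xi mu v G K T Hab Hc HGT d eta Hd Hm).
Qed.
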